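(* For every $n\ge1$: $2r_n\in C(2r_{n+1})$, $4r_n\in C(4r_{n+1})$, $2t_n\in C(2t_{n+1})$, $2s_n\in C(2s_{n+1})$, $2p_n\in C(2p_{n+1})$, $2q_n\in C(2q_{n+1})$, $2u_n\in C(2u_{n+1})$ and $2w_n\in C(2w_{n+1})$. For every $n\ge 2$: $2v_n\in C(2v_{n+1})$.
   Context: All operations are on $\mathbb{Z}_8$. For an operation $f$, $C(f)$ denotes the clone generated by $f$ together with binary addition and all unary constant operations. For $n\ge1$: $r_n=x_1\cdots x_n$; $t_n=x_1\cdots x_n(x_1+\dots+x_n)$ if $n$ is even and $t_n=x_1\cdots x_n(x_1+\dots+x_n+1)$ if $n$ is odd; $s_n=x_1\cdots x_n(x_1+\dots+x_n)$ if $n$ is odd and $s_n=x_1\cdots x_n(x_1+\dots+x_n+1)$ if $n$ is even; $p_n=x_1^2x_2\cdots x_n$; $q_n=x_1^3x_2\cdots x_n$; $w_n=x_1\cdots x_n(x_1^2+1)$; $u_n=x_1\cdots x_n(x_1+1)$; for $n\ge 2$, $v_n=x_1\cdots x_n(x_1+x_2)$. *)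

(* Defs.v *)
From mathcomp Require Import all_boot all_order all_algebra.
Set Implicit Arguments. Unset Strict Implicit. Unset Printing Implicit Defensive.
Import GRing.Theory.
Local Open Scope ring_scope.

Notation Z8 := 'Z_8.

Definition op (n : nat) := {ffun 'I_n -> Z8} -> Z8.

(* clone_gen f k g : the k-ary operation g belongs to C(f), the clone generated
   by f together with binary addition and all unary constant operations.
   (Extensional: ops equal pointwise are identified.) *)
Inductive clone_gen (m : nat) (f : op m) : forall k, op k -> Prop :=
| cg_base : clone_gen f f
| cg_proj : forall k (i : 'I_k), clone_gen f (fun x : {ffun 'I_k -> Z8} => x i)
| cg_add : clone_gen f (fun x : {ffun 'I_2 -> Z8} => x ord0 + x ord_max)
| cg_const : forall c : Z8, clone_gen f (fun _ : {ffun 'I_1 -> Z8} => c)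
| cg_comp : forall j k (g : op j) (h : 'I_j -> op k),
    clone_gen f g -> (forall i, clone_gen f (h i)) ->
    clone_gen f (fun x : {ffun 'I_k -> Z8} => g [ffun i => h i x])
| cg_ext : forall k (g g' : op k),
    clone_gen f g -> (forall x, g x = g' x) -> clone_gen f g'.

Definition C (m : nat) (f : op m) (k : nat) (g : op k) : Prop := clone_gen f g.

(* The first variable x_1 (for n >= 1), written as a sum over the index 0. *)
Definition x1 n (x : {ffun 'I_n -> Z8}) : Z8 := \sum_(i < n | val i == 0%N) x i.
Definition x2 n (x : {ffun 'I_n -> Z8}) : Z8 := \sum_(i < n | val i == 1%N) x i.

Definition prodx n (x : {ffun 'I_n -> Z8}) : Z8 := \prod_(i < n) x i.
Definition sumx n (x : {ffun 'I_n -> Z8}) : Z8 := \sum_(i < n) x i.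

Definition r n : op n := fun x => prodx x.
Definition t n : op n := fun x =>
  prodx x * (sumx x + (if odd n then 1 else 0)).
Definition s n : op n := fun x =>
  prodx x * (sumx x + (if odd n then 0 else 1)).
Definition p n : op n := fun x => x1 x ^+ 2 * \prod_(i < n | val i != 0%N) x i.
Definition q n : op n := fun x => x1 x ^+ 3 * \prod_(i < n | val i != 0%N) x i.
Definition w n : op n := fun x => prodx x * (x1 x ^+ 2 + 1).
Definition u n : op n := fun x => prodx x * (x1 x + 1).
Definition v n : op n := fun x => prodx x * (x1 x + x2 x).

Definition smul n (c : Z8) (f : op n) : op n := fun x => c * f x.
Arguments r : clear implicits.
Arguments t : clear implicits.
Arguments s : clear implicits.
Arguments p : clear implicits.
Arguments q : clear implicits.
Arguments w : clear implicits.
Arguments u : clear implicits.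
Arguments v : clear implicits.

(* Main.v *)
Require Import Defs.
From mathcomp Require Import all_boot all_order all_algebra.
From mathcomp Require Import ring.
Local Open Scope ring_scope.
Import GRing.Theory.
Set Implicit Arguments. Unset Strict Implicit. Unset Printing Implicit Defensive.

Definition ext n (x : {ffun 'I_n -> Z8}) (c : Z8) : {ffun 'I_n.+1 -> Z8} :=
  [ffun i => if unlift ord_max i is Some j then x j else c].

Lemma ext_w n (x : {ffun 'I_n -> Z8}) c (i : 'I_n) :
  ext x c (widen_ord (leqnSn n) i) = x i.
Proof.
have -> : widen_ord (leqnSn n) i = lift ord_max i by apply/val_inj => /=; rewrite /bump leqNgt ltn_ord.
by rewrite ffunE liftK.
Qed.

Lemma ext_m n (x : {ffun 'I_n -> Z8}) c : ext x c ord_max = c.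
Proof. by rewrite ffunE unlift_none. Qed.

Lemma cg_addf m (f : op m) k (g1 g2 : op k) :
  clone_gen f g1 -> clone_gen f g2 -> clone_gen f (fun x => g1 x + g2 x).
Proof.
move=> h1 h2.
pose h := fun i : 'I_2 => if val i == 0%N then g1 else g2.
apply: (cg_ext (cg_comp (cg_add f) (h := h) _)) => [i|x].
  by rewrite /h; case: ifP.
by rewrite !ffunE /h.
Qed.

Lemma cg_mulnf m (f : op m) k (g : op k) j :
  clone_gen f g -> clone_gen f (fun x => g x *+ j.+1).
Proof.
move=> hg; elim: j => [|j IH].
  by apply: (cg_ext hg) => x; rewrite mulr1n.
by apply: (cg_ext (cg_addf IH hg)) => x; rewrite [RHS]mulrS addrC.
Qed.

Lemma key n (f : op n.+1) (g : op n) (c : Z8) j :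
  (0 < n)%N -> (forall x, g x = f (ext x c) *+ j.+1) -> clone_gen f g.
Proof.
move=> n0 E.
have cst : clone_gen f (fun _ : {ffun 'I_n -> Z8} => c).
  pose i0 : 'I_n := Ordinal n0.
  apply: (cg_ext (cg_comp (cg_const f c) (h := fun _ => fun x => x i0) _)) => //.
  by move=> _; apply: cg_proj.
pose h := fun i : 'I_n.+1 => if unlift ord_max i is Some jj
            then (fun x : {ffun 'I_n -> Z8} => x jj) else (fun _ => c).
have H1 : clone_gen f (fun x => f (ext x c)).
  apply: (cg_ext (cg_comp (cg_base f) (h := h) _)) => [i|x].
    by rewrite /h; case: unlift => [jj|]; [apply: cg_proj|].
  congr f; apply/ffunP => i; rewrite !ffunE /h; by case: unlift.
by apply: (cg_ext (cg_mulnf j H1)) => x; rewrite E.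
Qed.

Lemma e8 : (8 : Z8) = 0.
Proof. by apply/val_inj. Qed.

Section Facts.
Variables (n : nat) (x : {ffun 'I_n -> Z8}) (c : Z8).
Lemma prod_ext : prodx (ext x c) = prodx x * c.
Proof. by rewrite /prodx big_ord_recr /= ext_m; under eq_bigr do rewrite ext_w. Qed.
Lemma sum_ext : sumx (ext x c) = sumx x + c.
Proof. by rewrite /sumx big_ord_recr /= ext_m; under eq_bigr do rewrite ext_w. Qed.
Lemma x1_ext : (0 < n)%N -> x1 (ext x c) = x1 x.
Proof.
move=> n0; rewrite /x1 big_mkcond big_ord_recr /= ext_m.
rewrite (negbTE (_ : n != 0%N)) ?addr0; last by rewrite -lt0n.
by rewrite [RHS]big_mkcond; apply: eq_bigr => i _ /=; rewrite ext_w.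
Qed.
Lemma x2_ext : (1 < n)%N -> x2 (ext x c) = x2 x.
Proof.
move=> n0; rewrite /x2 big_mkcond big_ord_recr /= ext_m.
rewrite (negbTE (_ : n != 1%N)) ?addr0; last by apply/eqP => E; rewrite E in n0.
by rewrite [RHS]big_mkcond; apply: eq_bigr => i _ /=; rewrite ext_w.
Qed.
Lemma prod1_ext : (0 < n)%N ->
  \prod_(i < n.+1 | val i != 0%N) ext x c i = (\prod_(i < n | val i != 0%N) x i) * c.
Proof.
move=> n0; rewrite big_mkcond big_ord_recr /= ext_m.
rewrite (_ : n != 0%N) ?addr0; last by rewrite -lt0n.
by rewrite [in RHS]big_mkcond; congr (_ * _); apply: eq_bigr => i _ /=; rewrite ext_w.
Qed.
End Facts.

Theorem lemma4p2 :
  (forall n : nat, (1 <= n)%N ->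
     C (smul 2 (r n.+1)) (smul 2 (r n)) /\
         C (smul 4 (r n.+1)) (smul 4 (r n)) /\
         C (smul 2 (t n.+1)) (smul 2 (t n)) /\
         C (smul 2 (s n.+1)) (smul 2 (s n)) /\
         C (smul 2 (p n.+1)) (smul 2 (p n)) /\
         C (smul 2 (q n.+1)) (smul 2 (q n)) /\
         C (smul 2 (u n.+1)) (smul 2 (u n)) /\
         C (smul 2 (w n.+1)) (smul 2 (w n))) /\
  (forall n : nat, (2 <= n)%N -> C (smul 2 (v n.+1)) (smul 2 (v n))).
Proof.
split=> [n n0|n n1]; last first.
  apply: (key (c := 1) (j := 0)); first exact: ltnW.
  move=> x; rewrite /smul /v prod_ext x1_ext ?x2_ext ?(ltnW n1) //.
  by rewrite mulr1n mulr1.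
split.
  apply: (key (c := 1) (j := 0)) => // x.
  by rewrite /smul /r prod_ext mulr1n mulr1.
split.
  apply: (key (c := 1) (j := 0)) => // x.
  by rewrite /smul /r prod_ext mulr1n mulr1.
split.
  case On: (odd n).
    apply: (key (c := 1) (j := 0)) => // x.
    rewrite /smul /t prod_ext sum_ext /= On /= mulr1n; ring.
  apply: (key (c := -1) (j := 6)) => // x.
  rewrite /smul /t prod_ext sum_ext /= On /=.
  apply/eqP; rewrite -subr_eq0; apply/eqP.
  set P := prodx x; set S := sumx x.
  have -> : 2 * (P * (S + 0)) - 2 * (P * -1 * (S + -1 + 1)) *+ 7 = 8 * (2 * P * S) by ring.
  by rewrite e8 mul0r.
split.
  case On: (odd n).
    apply: (key (c := -1) (j := 6)) => // x.
    rewrite /smul /s prod_ext sum_ext /= On /=.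
    apply/eqP; rewrite -subr_eq0; apply/eqP.
    set P := prodx x; set S := sumx x.
    have -> : 2 * (P * (S + 0)) - 2 * (P * -1 * (S + -1 + 1)) *+ 7 = 8 * (2 * P * S) by ring.
    by rewrite e8 mul0r.
  apply: (key (c := 1) (j := 0)) => // x.
  rewrite /smul /s prod_ext sum_ext /= On /= mulr1n; ring.
split.
  apply: (key (c := 1) (j := 0)) => // x.
  by rewrite /smul /p x1_ext // prod1_ext // mulr1n mulr1.
split.
  apply: (key (c := 1) (j := 0)) => // x.
  by rewrite /smul /q x1_ext // prod1_ext // mulr1n mulr1.
split.
  apply: (key (c := 1) (j := 0)) => // x.
  by rewrite /smul /u x1_ext // prod_ext // mulr1n mulr1.
apply: (key (c := 1) (j := 0)) => // x.
by rewrite /smul /w x1_ext // prod_ext // mulr1n mulr1.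
Qed.
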